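(* Let $\mathcal C\subset\mathbb R^n$ be compact with non-empty interior, boundary of Lebesgue measure zero, and $\mathcal C=-\mathcal C$. Put $\mathcal C^+=\mathcal C\cap\{y_n>0\}$, $\mathcal W=\mathrm{pr}(\mathcal C^+)$, $\widetilde{\mathcal C}^+=\{(\delta v',v'',v_n):(v',v'',v_n)\in\mathcal C^+,\ 0\le\delta\le1\}$ and $\widetilde{\mathcal A}_t=\widetilde{\mathcal C}^+\,\mathrm{diag}(e^{-nt}1_k,1_m,1)$ for $t\in\mathbb R$. Then for every $x\in\mathcal X$ for which $\xi_1(x,1)$ exists (i.e. the hitting-time multiset for $\mathcal W$ at $L=1$ is nonempty), $$\lim_{t\to\infty}r_1(x,\mathcal H(\widetilde{\mathcal A}_t))=|\xi_1(x,1)|.$$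
   Context: Fix integers $k\ge1$, $m\ge0$, $n=k+m+1$; $G=\mathrm{SL}(n,\mathbb R)$, $\Gamma=\mathrm{SL}(n,\mathbb Z)$, $\mathcal X=\Gamma\backslash G$. Row vectors $y=(y',y'',y_n)\in\mathbb R^k\times\mathbb R^m\times\mathbb R$, $G$ acting from the right; $\widehat{\mathbb Z}^n$ is the set of primitive integer vectors. $U(s)=\begin{pmatrix}1_k&0&0\\0&1_m&0\\-s&0&1\end{pmatrix}$ for $s\in\mathbb R^k$ (middle block absent if $m=0$), $h_s(x)=xU(s)$. Fix a norm $|\cdot|$ on $\mathbb R^k$. $\mathrm{pr}:\mathbb R^n\to\mathbb R^{m+1}$, $(y_1,\dots,y_n)\mapsto(y_{k+1},\dots,y_n)$. For Borel $\mathcal C\subset\mathbb R^n$, $\mathcal H(\mathcal C)=\{\Gamma g:\widehat{\mathbb Z}^ng\cap\mathcal C\ne\emptyset\}$; for $E\subset\mathcal X$, $r_1(x,E)=\inf\{|s|:h_s(x)\in E\}$. For $\mathcal W\subset\mathbb R^m\times\mathbb R_{>0}$, $x=\Gamma g$ and $L>0$, the hitting times $\xi_1(x,L),\xi_2(x,L),\dots$ list with multiplicity the multiset $\{v'/v_n: v\in\widehat{\mathbb Z}^ng,\ (v'',v_n)\in L^{-1}\mathcal W\}$ in order of nondecreasing $|\cdot|$ (the times at which $h_s(x)$ meets the section $\Gamma\backslash\Gamma H\{R(w):w\in L^{-1}\mathcal W\}$). *)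

(* Defs.v *)
From HB Require Import structures.
From mathcomp Require Import all_boot all_order all_algebra.
From mathcomp Require Import all_classical all_reals all_analysis.
Set Implicit Arguments. Unset Strict Implicit. Unset Printing Implicit Defensive.
Import Order.TTheory GRing.Theory Num.Theory.
Import numFieldNormedType.Exports.
Local Open Scope classical_set_scope.
Local Open Scope ring_scope.

(* Coordinates: R^n with n = k + m + 1 is 'rV[R]_((k + m).+1); row vectors,
   matrices act on the right.  Index i < k : the y' block, k <= i < k+m : the
   y'' block, i = k+m (= ord_max) : y_n. *)

Section Defs.
Variable R : realType.
Variables k m : nat.
Notation n := (k + m).+1.
Notation vec := 'rV[R]_n.

Definition vprime (v : vec) : 'rV[R]_k := \row_(i < k) v 0 (inord i).
Definition vmid (v : vec) : 'rV[R]_m := \row_(j < m) v 0 (inord (k + j)).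
Definition vlast (v : vec) : R := v 0 ord_max.

Definition pr (v : vec) : 'rV[R]_m * R := (vmid v, vlast v).

Definition scoord (s : 'rV[R]_k) (j : nat) : R :=
  if (insub j : option 'I_k) is Some i then s 0 i else 0.

Definition Umat (s : 'rV[R]_k) : 'M[R]_n :=
  \matrix_(i, j) ((if i == j then 1 else 0)
     - (if (i == ord_max) && (j < k)%N then scoord s j else 0)).

Definition Dmat (t : R) : 'M[R]_n :=
  \matrix_(i, j) (if i == j then (if (i < k)%N then expR (- (n%:R) * t) else 1)
                  else 0).

Definition scale_first (delta : R) (v : vec) : vec :=
  \row_(j < n) (if (j < k)%N then delta * v 0 j else v 0 j).

Definition is_norm (N : 'rV[R]_k -> R) : Prop :=
  (forall s, 0 <= N s) /\ (forall s, N s = 0 -> s = 0) /\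
  (forall (a : R) s, N (a *: s) = `|a| * N s) /\
  (forall s t, N (s + t) <= N s + N t).

Definition box (a b : vec) : set vec :=
  [set y | forall i, a 0 i <= y 0 i <= b 0 i].
Definition box_vol (a b : vec) : R := \prod_(i < n) (b 0 i - a 0 i).
Definition leb_null (S : set vec) : Prop :=
  forall eps : R, 0 < eps -> exists ab : nat -> vec * vec,
    (forall j i, (ab j).1 0 i <= (ab j).2 0 i) /\
    S `<=` \bigcup_j box (ab j).1 (ab j).2 /\
    (forall N : nat, \sum_(j < N) box_vol (ab j).1 (ab j).2 <= eps).

Definition boundary (S : set vec) : set vec := closure S `\` interior S.

Definition primitive (p : 'rV[int]_n) : Prop :=
  p != 0 /\ forall d : int, (forall i, (d %| p ord0 i)%Z) -> d = 1 \/ d = -1.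

Definition intvec (p : 'rV[int]_n) : vec := map_mx (fun z : int => z%:~R) p.

(* H(C) viewed on representatives g of x = Gamma g:
   \hat Z^n g meets C *)
Definition Hset (C : set vec) (g : 'M[R]_n) : Prop :=
  exists p, primitive p /\ C (intvec p *m g).

(* r_1(Gamma g, H(C)) = inf { |s| : h_s(Gamma g) in H(C) }, in \bar R
   (inf of the empty set is +oo) *)
Definition r1 (N : 'rV[R]_k -> R) (g : 'M[R]_n) (C : set vec) : \bar R :=
  ereal_inf [set (N s)%:E | s in [set s | Hset C (g *m Umat s)]].

Definition Cplus (C : set vec) : set vec := [set v | C v /\ 0 < vlast v].
Definition Wset (C : set vec) : set ('rV[R]_m * R) := pr @` Cplus C.
Definition Ctilde (C : set vec) : set vec :=
  [set w | exists v delta, Cplus C v /\ 0 <= delta <= 1 /\ w = scale_first delta v].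
Definition Atilde (C : set vec) (t : R) : set vec :=
  [set w *m Dmat t | w in Ctilde C].

(* hitting times for W at L = 1:
   { v'/v_n : v in \hat Z^n g, (v'', v_n) in W } (as a set; multiplicity is
   irrelevant for the first hitting time) *)
Definition hits (C : set vec) (g : 'M[R]_n) : set 'rV[R]_k :=
  [set (vlast v)^-1 *: vprime v | v in
     [set v | (exists p, primitive p /\ v = intvec p *m g) /\ Wset C (pr v)]].

Definition first_hit (N : 'rV[R]_k -> R) (C : set vec) (g : 'M[R]_n)
  (xi : 'rV[R]_k) : Prop :=
  hits C g xi /\ forall xi', hits C g xi' -> N xi <= N xi'.

End Defs.

(* Main.v *)
Require Import Defs.
From HB Require Import structures.
From mathcomp Require Import all_boot all_order all_algebra.
From mathcomp Require Import all_classical all_reals all_analysis.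
From mathcomp Require Import ring lra.
Import Order.TTheory GRing.Theory Num.Theory.
Import numFieldNormedType.Exports.
Local Open Scope classical_set_scope.
Local Open Scope ring_scope.

Section Aux.
Variable R : realType.

Lemma entry_le_norm a b (x : 'M[R]_(a, b)) i j : `|x i j| <= `|x|.
Proof.
rewrite [leRHS]/Num.Def.normr /= mx_normrE; apply/bigmax_geP; right => /=.
by exists (i, j).
Qed.

Lemma norm_le_entries a b (x : 'M[R]_(a, b)) (B : R) :
  0 <= B -> (forall i j, `|x i j| <= B) -> `|x| <= B.
Proof.
move=> B0 H; rewrite [leLHS]/Num.Def.normr /= mx_normrE; apply/bigmax_leP.
by split => // ij _; apply: H.
Qed.

Variable k : nat.
Variable N : 'rV[R]_k -> R.
Hypothesis hN : (forall s, 0 <= N s) /\ (forall s, N s = 0 -> s = 0) /\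
  (forall (a : R) s, N (a *: s) = `|a| * N s) /\
  (forall s t, N (s + t) <= N s + N t).

Lemma N0 : N 0 = 0.
Proof.
case: hN => _ [_ [hZ _]]; by rewrite -(scale0r 0) hZ normr0 mul0r.
Qed.

Lemma N_ub : exists K, 0 <= K /\ forall s, N s <= K * `|s|.
Proof.
case: hN => h0 [_ [hZ hD]].
exists (\sum_(j < k) N 'e_j); split.
  by apply: sumr_ge0 => j _; apply: h0.
move=> s; rewrite {1}(row_sum_delta s) mulr_suml.
elim/big_rec2: _ => [|j x y _ Hxy]; first by rewrite N0.
apply: (le_trans (hD _ _)); apply: lerD => //.
rewrite hZ mulrC ler_wpM2l //; exact: entry_le_norm.
Qed.

Lemma N_cont : continuous N.
Proof.
case: hN => h0 [_ [hZ hD]].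
have [K [K0 HK]] := N_ub.
move=> x; apply/(@cvgrPdist_le _ _ _ (nbhs x) (nbhs_filter x)) => e e0.
have eK : 0 < e / (K + 1) by rewrite divr_gt0 // ltr_wpDl.
near=> y.
have Hy : `|x - y| <= e / (K + 1) by near: y; apply: (@cvgr_dist_le _ _ _ (nbhs x) (nbhs_filter x) id x _ _ eK); exact: cvg_id.
have H1 : forall a b, N a - N b <= K * `|a - b|.
  move=> a b; have := hD (a - b) b; rewrite subrK => h.
  rewrite lerBlDr; apply: le_trans h _; by rewrite lerD2r.
have Kxy : K * `|x - y| <= e.
  apply: le_trans (ler_wpM2l K0 Hy) _.
  rewrite mulrA ler_pdivrMr ?ltr_wpDl // mulrC ler_wpM2l ?(ltW e0) // lerDl //.
rewrite ler_norml; apply/andP; split.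
  rewrite lerNl opprB; apply: le_trans (H1 y x) _; by rewrite distrC.
exact: le_trans (H1 x y) Kxy.
Unshelve. all: by end_near.
Qed.

Hypothesis hk : (1 <= k)%N.

Lemma N_lb : exists2 c, 0 < c & forall s, c * `|s| <= N s.
Proof.
case: hN => h0 [hpos [hZ hD]].
pose S := [set s : 'rV[R]_k | `|s| = 1].
have S0 : S !=set0.
  pose s0 : 'rV[R]_k := 'e_(Ordinal hk).
  have s00 : s0 != 0.
    apply/negP => /eqP/matrixP/(_ 0 (Ordinal hk)); rewrite !mxE !eqxx /=.
    by move/eqP; rewrite oner_eq0.
  by exists (`|s0|^-1 *: s0); rewrite /S /= normfZV.
have Sc : compact S.
  apply: bounded_closed_compact.
    exists 1; split; first by rewrite realE ler01.
    by move=> M M1 s; rewrite /S /= => ->; apply: ltW.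
  have -> : S = Num.Def.normr @^-1` [set x | x = 1] by [].
  apply: (continuous_closedP _).1; first exact: norm_continuous.
  exact: closed_eq.
have [c /set_mem Sc' Hc] := compact_EVT_min S0 Sc (@continuous_subspaceT _ _ S N N_cont).
exists (N c).
  rewrite lt_def h0 andbT; apply/eqP => /hpos c0.
  by move: Sc'; rewrite /S /= c0 normr0 => /esym/eqP; rewrite oner_eq0.
move=> s; have [->|s0] := eqVneq s 0; first by rewrite normr0 mulr0.
have := Hc (`|s|^-1 *: s) (mem_set (normfZV s0)).
rewrite hZ normfV normr_id => H.
rewrite mulrC -ler_pdivlMl ?normr_gt0 //.
Qed.

End Aux.

Section Lat.
Variable R : realType.

Definition iv {n} (p : 'rV[int]_n) : 'rV[R]_n := map_mx (fun z : int => z%:~R) p.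

Lemma lat_gap n (g : 'M[R]_n) (hg : g \in unitmx) (B : R) (j0 : 'I_n) :
  exists2 c0 : R, 0 < c0 & forall p : 'rV[int]_n,
    (forall j, `|(iv p *m g) 0 j| <= B) -> 0 < (iv p *m g) 0 j0 ->
    c0 <= (iv p *m g) 0 j0.
Proof.
pose M0 : R := n%:R * `|B| * `|invmx g|.
have M00 : 0 <= M0 by rewrite mulr_ge0 // mulr_ge0.
pose M := Num.Def.archi_bound M0.
have hM := archi_boundP M00.
have bnd : forall p : 'rV[int]_n, (forall j, `|(iv p *m g) 0 j| <= B) ->
    forall i, (`|p ord0 i| < M)%N.
  move=> p Hp i.
  have e : iv p = (iv p *m g) *m invmx g by rewrite mulmxK.
  have : `|(iv p) 0 i| <= M0.
    rewrite e mxE; apply: le_trans (ler_norm_sum _ _ _) _.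
    apply: (@le_trans _ _ (\sum_(j < n) `|B| * `|invmx g|)).
      apply: ler_sum => j _; rewrite normrM; apply: ler_pM => //.
        exact: le_trans (Hp j) (ler_norm B).
      exact: entry_le_norm.
    by rewrite sumr_const card_ord /M0 -mulrA mulr_natl.
  rewrite /iv mxE -intr_norm -natr_absz => H.
  by rewrite -(ltr_nat R); apply: le_lt_trans H hM.
pose T := {ffun 'I_n -> 'I_M * bool}.
pose F (q : T) : 'rV[int]_n := \row_i ((-1) ^+ (q i).2 * ((q i).1 : nat)%:Z).
pose val (q : T) := (iv (F q) *m g) 0 j0.
exists (\big[Order.min/1]_(q | 0 < val q) val q).
  by elim/big_ind: _ => //= x y hx hy; rewrite lt_min hx hy.
move=> p Hp Hpos.
have Hb := bnd p Hp.
pose q : T := [ffun i => (Ordinal (Hb i), p 0 i < 0)].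
have Fq : F q = p.
  by apply/rowP => i; rewrite mxE ffunE /= [RHS]intEsign.
have -> : (iv p *m g) 0 j0 = val q by rewrite /val Fq.
by apply: bigmin_le_cond; rewrite /val Fq.
Qed.

End Lat.

Section Ent.
Variable R : realType.
Variables k m : nat.
Local Notation n := (k + m).+1.

Lemma U_entry (v : 'rV[R]_n) (s : 'rV[R]_k) (j : 'I_n) :
  (v *m Umat m s) 0 j = v 0 j - (if (j < k)%N then vlast v * scoord s j else 0).
Proof.
pose E : 'M[R]_n := \matrix_(i, j) (if (i == ord_max) && (j < k)%N then scoord s j else 0).
have -> : Umat m s = 1%:M - E.
  by apply/matrixP => i l; rewrite !mxE; case: eqP.
rewrite mulmxBr mulmx1 !mxE.
congr (_ - _).
rewrite (bigD1 ord_max) //= big1 => [|i /negbTE ni]; last by rewrite mxE ni mulr0.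
by rewrite mxE eqxx /=; case: ifP; rewrite ?mulr0 ?addr0.
Qed.

Lemma D_entry (w : 'rV[R]_n) (t : R) (j : 'I_n) :
  (w *m Dmat k m t) 0 j = w 0 j * (if (j < k)%N then expR (- (n%:R) * t) else 1).
Proof.
rewrite mxE (bigD1 j) //= big1 => [|i /negbTE ni]; last by rewrite mxE ni mulr0.
by rewrite mxE eqxx addr0.
Qed.

Lemma pr_eq_entries (v w : 'rV[R]_n) :
  pr v = pr w -> forall j : 'I_n, (k <= j)%N -> v 0 j = w 0 j.
Proof.
case=> hmid hlast j kj.
have [jm|] := eqVneq j ord_max; first by rewrite jm; exact: hlast.
move=> jnm.
have jlt : (j - k < m)%N.
  have := ltn_ord j; have : (j : nat) != k + m.
    by apply: contra jnm => /eqP h; apply/eqP/val_inj.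
  move=> /negbTE h1 h2; rewrite ltn_subLR //.
  by rewrite ltnS leq_eqVlt h1 in h2.
have := congr1 (fun r : 'rV[R]_m => r 0 (Ordinal jlt)) hmid.
rewrite /= !mxE.
have -> : inord (k + (j - k)) = j by apply/val_inj; rewrite /= subnKC // inordK.
by [].
Qed.

Lemma entries_pr_eq (v w : 'rV[R]_n) :
  (forall j : 'I_n, (k <= j)%N -> v 0 j = w 0 j) -> pr v = pr w.
Proof.
move=> H; rewrite /pr; congr (_, _).
  apply/rowP => i; rewrite !mxE; apply: H.
  by rewrite inordK ?leq_addr // ltnS leq_add2l ltnW.
by apply: H; rewrite /= leq_addr.
Qed.

Lemma scoord_lt (s : 'rV[R]_k) (j : nat) (h : (j < k)%N) : scoord s j = s 0 (Ordinal h).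
Proof.
by rewrite /scoord insubT //= => h'; congr (s 0 _); apply/val_inj.
Qed.

End Ent.

Lemma upper (R : realType) (k m : nat) (N : 'rV[R]_k -> R)
  (C : set 'rV[R]_((k + m).+1)) (g : 'M[R]_((k + m).+1))
  (xi : 'rV[R]_k) (hxi : first_hit N C g xi) (t : R) :
  (r1 N g (Atilde C t) <= (N xi)%:E)%E.
Proof.
apply: ereal_inf_lbound; exists xi => //.
case: hxi => -[v [[p [pp ->]] [w wC wv]] <-] _.
have vl : 0 < vlast (intvec R p *m g).
  by move: (congr1 snd wv) => /= <-; case: wC.
exists p; split => //.
exists (scale_first 0 w).
  by exists w, 0; split => //; rewrite lexx ler01.
apply/rowP => j; rewrite D_entry mulmxA U_entry mxE.
case: ifP => jk.
  rewrite mul0r mul0r.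
  rewrite (@scoord_lt _ _ _ _ jk) !mxE.
  have -> : inord (Ordinal jk) = j :> 'I_(k+m).+1 by apply/val_inj; rewrite /= inordK.
  by rewrite mulrA mulfV ?gt_eqF // mul1r subrr.
rewrite subr0 mulr1; apply/esym/pr_eq_entries => //.
by rewrite leqNgt jk.
Qed.

Lemma lower (R : realType) (k m : nat) (hk : (1 <= k)%N)
  (N : 'rV[R]_k -> R) (hN : is_norm N)
  (C : set 'rV[R]_((k + m).+1)) (hCc : compact C)
  (g : 'M[R]_((k + m).+1)) (hg : \det g = 1)
  (xi : 'rV[R]_k) (hxi : first_hit N C g xi) (eps : R) (he : 0 < eps) :
  \forall t \near +oo, ((N xi - eps)%:E <= r1 N g (Atilde C t))%E.
Proof.
have hN' := hN.
case: hN' => h0 [hpos [hZ hD]].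
have [K [K0 HK]] := @N_ub _ _ _ hN.
have [c c0 Hc] := @N_lb _ _ _ hN hk.
set X := N xi.
have X0 : 0 <= X by apply: h0.
have [B [B0 HB]] : exists B : R, 0 <= B /\ forall w, C w -> `|w| <= B.
  have [M [_ HM]] := compact_bounded hCc.
  exists (`|M| + 1); split; first by rewrite addr_ge0.
  move=> w Cw; apply: (HM (`|M| + 1)) => //.
  by apply: le_lt_trans (ler_norm M) _; rewrite ltrDl.
pose B' := B * X / c + B.
have gu : g \in unitmx by rewrite unitmxE hg unitr1.
have [c1 c10 Hc1] := @lat_gap _ _ g gu B' ord_max.
pose eta0 := Order.min 1 (eps * c1 / (K * B + 1)).
have eta00 : 0 < eta0.
  by rewrite lt_min ltr01 /= divr_gt0 // ?mulr_gt0 // ltr_wpDl // mulr_ge0.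
near=> t.
set n' := (k + m).+1.
set eta := expR (- n'%:R * t).
have ht0 : 0 <= t by near: t; apply: nbhs_pinfty_ge; rewrite real0.
have ht1 : expR (- t) <= eta0.
  near: t; apply: (filterS _ (@cvgr_dist_le _ _ _ _ _ _ _ (@cvgr_expR R) _ eta00)) => x.
  by rewrite sub0r normrN ger0_norm // expR_ge0.
have eta_le : eta <= eta0.
  apply: le_trans ht1; rewrite ler_expR mulNr lerN2 ler_peMl //.
  by rewrite /n' ler1n.
have eta_ge0 : 0 <= eta by rewrite expR_ge0.
apply/ereal_infP => _ [s Hs <-]; rewrite lee_fin.
case: Hs => p [pp [w0 [w [del [wC [hdel ->]]]] E]].
rewrite mulmxA in E.
set v := intvec R p *m g in E.
have vdef : v = intvec R p *m g by [].
clearbody v.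
have Ej : forall j, (scale_first del w *m Dmat k m t) 0 j = (v *m Umat m s) 0 j.
  by move=> j; rewrite E.
have Ehigh : forall j : 'I_n', (k <= j)%N -> v 0 j = w 0 j.
  move=> j kj; have := Ej j; rewrite D_entry U_entry mxE ltnNge kj /=.
  by rewrite mulr1 subr0.
have Elow : forall i : 'I_k, v 0 (inord i) - vlast v * s 0 i = eta * del * w 0 (inord i).
  move=> i; have := Ej (inord i).
  have ik : (i < n')%N by rewrite /n' ltnS (leq_trans (ltnW (ltn_ord i))) // leq_addr.
  rewrite D_entry U_entry mxE inordK // ltn_ord.
  rewrite (@scoord_lt _ _ s i (ltn_ord i)).
  have -> : Ordinal (ltn_ord i) = i by apply/val_inj.
  by move=> <-; rewrite /eta; ring.
have kmax : (k <= @ord_max (k + m))%N by rewrite /= leq_addr.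
have vw_last : vlast v = vlast w by apply: Ehigh.
have vn0 : 0 < vlast v by rewrite vw_last; case: wC.
have Cw : C w by case: wC.
have wB := HB w Cw.
have [d0 d1] : 0 <= del /\ del <= 1 by move/andP: hdel.
have Hv : vprime v = vlast v *: s + (eta * del) *: vprime w.
  apply/rowP => i; rewrite !mxE -Elow; ring.
have [XNs|NsX] := leP X (N s).
  by apply: le_trans XNs; rewrite lerBlDr lerDl ltW.
have sB : `|s| <= X / c.
  by rewrite ler_pdivlMr // mulrC; apply: le_trans (Hc s) (ltW NsX).
have ed1 : eta * del <= 1.
  rewrite -[1]mulr1; apply: ler_pM => //; apply: le_trans eta_le _.
  by rewrite ge_min lexx.
have vB : forall j, `|v 0 j| <= B'.
  move=> j; case: (ltnP j k) => jk.
    have -> : v 0 j = vprime v 0 (Ordinal jk).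
      by rewrite mxE; congr (v 0 _); apply/val_inj; rewrite /= inordK.
    rewrite Hv !mxE; apply: le_trans (ler_normD _ _) _.
    rewrite !normrM /B'; apply: lerD.
      rewrite -mulrA; apply: ler_pM => //.
        by rewrite vw_last /vlast; exact: (le_trans (entry_le_norm _ _ _ _ _ _) wB).
      exact: le_trans (entry_le_norm _ _ _ _ _ _) sB.
    rewrite -[B]mul1r; apply: ler_pM => //.
      by rewrite !ger0_norm.
    exact: le_trans (entry_le_norm _ _ _ _ _ _) wB.
  rewrite Ehigh //; apply: le_trans (le_trans (entry_le_norm _ _ _ _ _ _) wB) _.
  by rewrite /B' lerDr divr_ge0 // ?mulr_ge0 // ltW.
have c1v : c1 <= vlast v by rewrite vdef; apply: Hc1; rewrite -vdef.
have hit : hits C g ((vlast v)^-1 *: vprime v).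
  exists v => //; split; first by exists p.
  exists w => //; apply: entries_pr_eq => j kj; exact/esym/Ehigh.
have XNh := hxi.2 _ hit; rewrite -/X in XNh.
have hE : (vlast v)^-1 *: vprime v = s + (eta * del / vlast v) *: vprime w.
  rewrite Hv scalerDr !scalerA mulVf ?gt_eqF // scale1r; congr (_ + _).
  by rewrite mulrC.
have wpB : N (vprime w) <= K * B.
  apply: le_trans (HK _) _; apply: ler_wpM2l => //.
  apply: norm_le_entries => // i j; rewrite !mxE.
  exact: (le_trans (entry_le_norm _ _ _ _ _ _) wB).
have Nh : N ((vlast v)^-1 *: vprime v) <= N s + eta * del / vlast v * (K * B).
  rewrite hE; apply: le_trans (hD _ _) _; rewrite lerD2l hZ ger0_norm.
    by apply: ler_wpM2l => //; rewrite divr_ge0 ?mulr_ge0 // ltW.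
  by rewrite divr_ge0 ?mulr_ge0 // ltW.
have small : eta * del / vlast v * (K * B) <= eps.
  have KB0 : 0 <= K * B by rewrite mulr_ge0.
  have h1 : eta * del / vlast v <= eta0 / c1.
    apply: ler_pM.
    - by rewrite mulr_ge0.
    - by rewrite invr_ge0 ltW.
    - rewrite -[eta0]mulr1; apply: ler_pM => //.
    - by rewrite lef_pV2 ?posrE // ltW.
  have h2 : eta0 <= eps * c1 / (K * B + 1) by rewrite ge_min lexx orbT.
  apply: le_trans (ler_wpM2r KB0 h1) _.
  apply: (@le_trans _ _ (eps * c1 / (K * B + 1) / c1 * (K * B))).

    apply: ler_wpM2r => //; apply: ler_wpM2r => //; by rewrite invr_ge0 ltW.
  have KB1 : 0 < K * B + 1 by rewrite ltr_wpDl.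
  have -> : eps * c1 / (K * B + 1) / c1 * (K * B) = eps * ((K * B) / (K * B + 1)).
    by field; rewrite ?gt_eqF.
  rewrite ler_piMr ?(ltW he) // ler_pdivrMr // mul1r lerDl //.
lra.
Unshelve. all: by end_near.
Qed.

Theorem lemma2 (R : realType) (k m : nat) (hk : (1 <= k)%N)
  (N : 'rV[R]_k -> R) (hN : is_norm N)
  (C : set 'rV[R]_((k + m).+1))
  (hCc : compact C) (hCi : interior C !=set0)
  (hCb : leb_null (boundary C))
  (hCs : [set - y | y in C] = C)
  (g : 'M[R]_((k + m).+1)) (hg : \det g = 1)
  (xi : 'rV[R]_k) (hxi : first_hit N C g xi) :
  (fun t : R => r1 N g (Atilde C t)) @ +oo%R --> ((N xi)%:E : \bar R).
Proof.
apply/fine_cvgP; split.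
  near=> t.
  have hl : ((N xi - 1)%:E <= r1 N g (Atilde C t))%E.
    by near: t; apply: (@lower _ _ _ hk _ hN _ hCc _ hg _ hxi _ ltr01).
  have hu := @upper _ _ _ _ _ _ _ hxi t.
  by move: hl hu; case: (r1 N g (Atilde C t)).
apply/cvgrPdist_le => e e0.
near=> t.
have hl : ((N xi - e)%:E <= r1 N g (Atilde C t))%E.
  by near: t; apply: (@lower _ _ _ hk _ hN _ hCc _ hg _ hxi _ e0).
have hu := @upper _ _ _ _ _ _ _ hxi t.
rewrite /=; move: hl hu; case: (r1 N g (Atilde C t)) => //= r; rewrite !lee_fin => h1 h2.
rewrite ger0_norm ?subr_ge0 //; lra.
Unshelve. all: by end_near.
Qed.
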